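(* Let $\Pi$ be a finite set of proposition symbols, $I=[a]$ with $a$ a positive integer, and $n\in\mathbb N$. Two finite pointed $(\Pi,I)$-models $(M,w)$ and $(N,v)$ satisfy exactly the same full graded multimodal $(\Pi,I)$-type of modal depth $n$ if and only if, for every counting multichannel message passing automaton $A$ for $(\Pi,I)$ and every round $t\le n$, the state of $A$ at $w$ in $M$ in round $t$ equals the state of $A$ at $v$ in $N$ in round $t$.
   Context: $(\Pi,I)$-formulae of graded multimodal logic are generated by $\varphi ::= \top \mid p \mid \neg\varphi \mid (\varphi\land\varphi) \mid \langle\alpha\rangle_{\geq k}\varphi$ ($p\in\Pi$, $\alpha\in I$, $k\in\mathbb N$); $\langle\alpha\rangle_{=k}\varphi$ abbreviates $\langle\alpha\rangle_{\geq k}\varphi\land\neg\langle\alpha\rangle_{\geq k+1}\varphi$. A $(\Pi,I)$-model is $M=(W,(R_\alpha)_{\alpha\in I},V)$ with $W$ nonempty finite, $R_\alpha\subseteq W\times W$, $V\colon\Pi\to\wp(W)$; pointed model $(M,w)$; $\mathcal N^\alpha(w)=\{u:(w,u)\in R_\alpha\}$. Semantics standard, $(M,w)\models\langle\alpha\rangle_{\geq k}\psi$ iff $|\{u\in\mathcal N^\alpha(w):(M,u)\models\psi\}|\geq k$. Full graded multimodal types: $\tau^{(M,w)}_\varepsilon$ is the canonically ordered conjunction of $p$ ($p\in\Pi$, $w\in V(p)$) and $\neg p$ ($p\in\Pi$, $w\notin V(p)$), $\top$ if $\Pi=\emptyset$. For widths $\mathbf k=(\mathbf k_1,\dots,\mathbf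 k_n)$, $\mathbf k_i\in\mathbb N^{|I|}$, $T_{\mathbf k}$ is the set of all types of width $\mathbf k$ of finite pointed models, and for $\mathbf k_0=(k_1,\dots,k_{|I|})$, $\tau^{(M,w)}_{(\mathbf k_0,\mathbf k)}$ is the canonical conjunction of $\tau^{(M,w)}_\varepsilon$, all $\langle\alpha\rangle_{=\ell}\tau$ ($1\le\ell\le k_\alpha-1$, $\tau\in T_{\mathbf k}$) true at $(M,w)$, all $\langle\alpha\rangle_{\geq k_\alpha}\tau$ ($\tau\in T_{\mathbf k}$) true at $(M,w)$, and all $\langle\alpha\rangle_{=|\mathcal N^\alpha(w)|}\top$ with $k_\alpha>|\mathcal N^\alpha(w)|$. The full type of depth $0$ is $\tau^{(M,w)}_0=\tau^{(M,w)}_\varepsilon$; the full type of depth $n+1$ is $\tau^{(M,w)}_{n+1}=\tau^{(M,w)}_{(\mathbf k_1,\dots,\mathbf k_{n+1})}$ for any widths with $k_{i,\alpha}>\max\{|\mathcal N^\alpha(u)|:(w,u)\in(\bigcup_\beta R_\beta)^{i-1}\}$ for all $i\in[n+1]$, $\alpha\in I$. A multiset over $X$ is a function $X\to\mathbb N$; $\mathfrak m(X)$ is the set of multisets over $X$. A counting multichannel message passing automaton for $(\Pi,I)$ is $A=(Q,\pi,\delta,F)$ with $Q$ a nonempty countable set, $\pi\colon\wp(\Pi)\to Q$, $\delta\colon\mathfrak m(Q)^{|I|}\times Q\to Q$, $F\subseteq Q$. Its states on a finite model $M$ are given by $f_0(w)=\pi(\{p\in\Pi:w\in V(p)\})$ and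 $f_{t+1}(w)=\delta(N_1,\dots,N_{|I|},f_t(w))$, where $N_\alpha$ is the multiset of values $f_t(u)$ for $u\in\mathcal N^\alpha(w)$; $f_t(w)$ is the state at $w$ in round $t$. *)

(* Defs.v *)
From HB Require Import structures.
From mathcomp Require Import all_boot.
From Stdlib Require Import ClassicalEpsilon.

Unset Strict Implicit.
Unset Printing Implicit Defensive.

Section Logic.
Variables (P : finType) (a : nat).

Inductive form : Type :=
  | Top : form
  | Var : P -> form
  | Neg : form -> form
  | And : form -> form -> form
  | Dia : 'I_a -> nat -> form -> form.

(* countable structure on formulas (used only to fix a canonical order) *)
Fixpoint enc (f : form) : GenTree.tree (P + ('I_a * nat)) :=
  match f with
  | Top => GenTree.Node 0 [::]
  | Var p => GenTree.Leaf (inl p)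
  | Neg g => GenTree.Node 1 [:: enc g]
  | And g h => GenTree.Node 2 [:: enc g; enc h]
  | Dia i k g => GenTree.Node 3 [:: GenTree.Leaf (inr (i, k)); enc g]
  end.

Fixpoint dec (t : GenTree.tree (P + ('I_a * nat))) : option form :=
  match t with
  | GenTree.Node 0 [::] => Some Top
  | GenTree.Leaf (inl p) => Some (Var p)
  | GenTree.Node 1 [:: g] => omap Neg (dec g)
  | GenTree.Node 2 [:: g; h] =>
      if dec g is Some g' then omap (And g') (dec h) else None
  | GenTree.Node 3 [:: GenTree.Leaf (inr (i, k)); g] => omap (Dia i k) (dec g)
  | _ => None
  end.

Lemma encK : pcancel enc dec.
Proof. by elim=> //= [g -> | g -> h -> | i k g ->]. Qed.

HB.instance Definition _ := Countable.copy form (pcan_type encK).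

Definition Deq (i : 'I_a) (k : nat) (f : form) : form :=
  And (Dia i k f) (Neg (Dia i k.+1 f)).

Definition bigAnd (s : seq form) : form :=
  match sort (fun x y => pickle x <= pickle y) (undup s) with
  | [::] => Top
  | x :: r => foldl And x r
  end.

(** Canonically ordered conjunction of a (finite) set of formulas given as a
    predicate; it depends only on the set. *)
Definition conj_set (S : form -> Prop) : form :=
  match excluded_middle_informative
          (exists s : seq form, forall f, S f <-> f \in s) with
  | left H => bigAnd (proj1_sig (constructive_indefinite_description _ H))
  | right _ => Top
  end.

(** Finite (Pi,I)-models: W finite (nonemptiness is provided by the point). *)
Record model : Type := Model {
  W : finType;
  R : 'I_a -> rel W;
  V : P -> {set W}
}.

Definition succs (M : model) (i : 'I_a) (w : W M) : {set W M} :=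
  [set u | R M i w u].

Definition deg (M : model) (i : 'I_a) (w : W M) : nat := #|succs M i w|.

Fixpoint sat (M : model) (f : form) : pred (W M) :=
  match f with
  | Top => predT
  | Var p => fun w => w \in V M p
  | Neg g => fun w => ~~ sat M g w
  | And g h => fun w => sat M g w && sat M h w
  | Dia i k g => fun w => k <= #|[set u in succs M i w | sat M g u]|
  end.

Definition tau_eps (M : model) (w : W M) : form :=
  bigAnd [seq (if w \in V M p then Var p else Neg (Var p)) | p <- enum P].

(** Conjuncts of the type of width (k0, ks), given the set Tk = T_ks. *)
Definition conjuncts (k0 : 'I_a -> nat) (Tk : form -> Prop)
    (M : model) (w : W M) (f : form) : Prop :=
  f = tau_eps M w
  \/ (exists (i : 'I_a) (l : nat) (t : form),
        [/\ Tk t, 0 < l < k0 i, f = Deq i l t & sat M (Deq i l t) w])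
  \/ (exists (i : 'I_a) (t : form),
        [/\ Tk t, f = Dia i (k0 i) t & sat M (Dia i (k0 i) t) w])
  \/ (exists i : 'I_a, deg M i w < k0 i /\ f = Deq i (deg M i w) Top).

Fixpoint typ (ks : seq ('I_a -> nat)) : forall M : model, W M -> form :=
  match ks with
  | [::] => tau_eps
  | k0 :: ks' => fun M w =>
      conj_set (conjuncts k0
                  (fun t => exists (M' : model) (w' : W M'), t = typ ks' M' w')
                  M w)
  end.

Fixpoint reach (M : model) (j : nat) (w u : W M) : bool :=
  if j is j'.+1 then [exists x, [exists i, R M i w x] && reach M j' x u]
  else u == w.

(** Widths ks (of length n) are admissible for the full type of (M,w):
    k_{i,alpha} > max{ |N^alpha(u)| : (w,u) in (U R)^(i-1) }  (max of the
    empty set taken to be 0). *)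
Definition valid_widths (M : model) (w : W M) (ks : seq ('I_a -> nat)) :=
  forall (j : nat) (i : 'I_a), j < size ks ->
    \max_(u | reach M j w u) deg M i u < nth (fun _ => 0) ks j i.

Definition same_full_type (n : nat) (M N : model) (w : W M) (v : W N) :=
  forall ks : seq ('I_a -> nat),
    size ks = n -> valid_widths M w ks -> valid_widths N v ks ->
    typ ks M w = typ ks N v.

(** Counting multichannel message passing automata; multisets over Q are
    functions Q -> nat. *)
Record automaton : Type := Automaton {
  Q : countType;
  pi : {set P} -> Q;
  delta : ('I_a -> (Q -> nat)) -> Q -> Q;
  F : pred Q
}.

Fixpoint state (A : automaton) (M : model) (t : nat) : W M -> Q A :=
  match t with
  | 0 => fun w => pi A [set p | w \in V M p]
  | t'.+1 => fun w =>
      delta A (fun i q => #|[set u in succs M i w | state A M t' u == q]|)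
              (state A M t' w)
  end.

End Logic.

Arguments Top {P a}.
Arguments W {P a} m.
Arguments R {P a} m i.
Arguments V {P a} m p.
Arguments Q {P a} _.
Arguments pi {P a} _.
Arguments delta {P a} _.
Arguments F {P a} _.
Arguments sat {P a} M f.
Arguments deg {P a} M i w.
Arguments succs {P a} M i w.
Arguments tau_eps {P a} M w.
Arguments typ {P a} ks M w.
Arguments reach {P a} M j w u.
Arguments valid_widths {P a} M w ks.
Arguments same_full_type {P a} n M N w v.
Arguments state {P a} A M t w.

(* Main.v *)
Require Import Defs.
From mathcomp Require Import all_boot.
From Stdlib Require Import ClassicalEpsilon FunctionalExtensionality PropExtensionality.

Set Implicit Arguments.
Unset Strict Implicit.
Unset Printing Implicit Defensive.

Arguments Var {P a}. Arguments Neg {P a}. Arguments And {P a}. Arguments Dia {P a}.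
Arguments Deq {P a}. Arguments bigAnd {P a}. Arguments conj_set {P a}.
Arguments conjuncts {P a}.

Section Main.
Variables (P : finType) (a : nat).
Local Notation form := (form P a).
Local Notation model := (model P a).

Definition asb (X : Prop) : bool := if excluded_middle_informative X then true else false.
Lemma asbE (X : Prop) : asb X <-> X.
Proof. by rewrite /asb; case: excluded_middle_informative. Qed.

Lemma sat_foldl (M : model) x (y : form) r :
  sat M (foldl And y r) x = sat M y x && all (fun f => sat M f x) r.
Proof.
elim: r y => [|z r IH] y /=; first by rewrite andbT.
by rewrite IH /= andbA.
Qed.

Definition leF (x y : form) := pickle x <= pickle y.

Lemma sat_bigAnd (M : model) x (s : seq form) :
  sat M (bigAnd s) x = all (fun f => sat M f x) s.
Proof.
rewrite /bigAnd.
have E : all (fun f => sat M f x) s =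
         all (fun f => sat M f x) (sort (fun x y => pickle x <= pickle y) (undup s)).
  by apply: eq_all_r => f; rewrite mem_sort mem_undup.
rewrite E; case: (sort _ _) => [|y r] //=.
by rewrite sat_foldl.
Qed.

Lemma bigAnd_eq (s1 s2 : seq form) : s1 =i s2 -> bigAnd s1 = bigAnd s2.
Proof.
move=> H; rewrite /bigAnd.
have -> : sort (fun x y : form => pickle x <= pickle y) (undup s1)
        = sort (fun x y : form => pickle x <= pickle y) (undup s2).
  apply/perm_sortP.
  - by move=> x y; apply: leq_total.
  - by move=> x y z; apply: leq_trans.
  - by move=> x y /anti_leq /(pcan_inj (@pickleK _)).
  apply: uniq_perm; rewrite ?undup_uniq // => f.
  by rewrite !mem_undup H.
by [].
Qed.

Lemma conj_set_fin (S : form -> Prop) (C : seq form) :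
  (forall f, S f -> f \in C) -> exists s : seq form, forall f, S f <-> f \in s.
Proof.
move=> H; exists [seq f <- C | asb (S f)] => f; rewrite mem_filter; split.
  by move=> Sf; rewrite H // andbT; apply/asbE.
by case/andP => /asbE.
Qed.

Lemma conj_set_eq (S : form -> Prop) s :
  (forall f, S f <-> f \in s) -> conj_set S = bigAnd s.
Proof.
move=> Hs; rewrite /conj_set; case: excluded_middle_informative => [H|nH]; last first.
  by exfalso; apply: nH; exists s.
case: constructive_indefinite_description => s' Hs' /=.
by apply: bigAnd_eq => f; apply/idP/idP => [/(Hs' f) /(Hs f)|/(Hs f) /(Hs' f)].
Qed.

Lemma sat_conj_set (S : form -> Prop) (M : model) x :
  (exists s : seq form, forall f, S f <-> f \in s) ->
  sat M (conj_set S) x <-> (forall f, S f -> sat M f x).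
Proof.
case=> s Hs; rewrite (conj_set_eq Hs) sat_bigAnd; split.
  by move/allP => H f /Hs; apply: H.
by move=> H; apply/allP => f /Hs; apply: H.
Qed.

Lemma sat_tau (M N : model) u x :
  sat N (tau_eps M u) x <-> forall p, (x \in V N p) = (u \in V M p).
Proof.
rewrite /tau_eps sat_bigAnd all_map; split.
  move/allP => H p; have := H p (mem_enum _ p).
  rewrite /preim /=; have [E|E] := boolP (u \in V M p); rewrite ?E ?(negbTE E) /=; first by []. by move/negbTE.
move=> H; apply/allP => p _.
rewrite /preim /=; have [E|E] := boolP (u \in V M p); rewrite ?E ?(negbTE E) /= H //.
Qed.

Lemma cnt (T : finType) (S : {set T}) (p : pred T) :
  #|[set u in S | p u]| = count p (enum S).
Proof.
rewrite -size_filter.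
have -> : #|[set u in S | p u]| = #|[seq u <- enum S | p u]|.
  by apply: eq_card => u; rewrite inE mem_filter mem_enum andbC.
by apply/card_uniqP; rewrite filter_uniq // enum_uniq.
Qed.

Lemma cardsT' (T : finType) (S : {set T}) : #|[set u in S | predT u]| = #|S|.
Proof. by apply: eq_card => u; rewrite inE andbT. Qed.

Lemma count_perm (T : eqType) (s1 s2 : seq T) :
  size s1 = size s2 -> {in s1, forall z, count_mem z s1 = count_mem z s2} ->
  perm_eq s1 s2.
Proof.
elim: s1 s2 => [|z s1 IH] s2.
  by case: s2.
move=> Hsz Hc.
have zin : z \in s2.
  by rewrite -has_pred1 has_count -Hc ?mem_head //= eqxx.
have Hp := perm_to_rem zin.
apply: (perm_trans _ (etrans (perm_sym _ _) Hp)).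
rewrite perm_cons; apply: IH.
  by rewrite size_rem // -Hsz.
move=> y ys; have := Hc y (mem_behead (s:=z::s1) ys).
rewrite (permP Hp) /=.
by move/eqP; rewrite eqn_add2l => /eqP.
Qed.

End Main.


Unset Implicit Arguments.
Unset Strict Implicit.
Unset Printing Implicit Defensive.

Section Main2.
Variables (P : finType) (a : nat).
Local Notation form := (form P a).
Local Notation model := (model P a).

Definition Tk (ks : seq ('I_a -> nat)) (t : form) : Prop :=
  exists (M' : model) (w' : W M'), t = typ ks M' w'.

Lemma typ_cons k0 ks (M : model) u :
  typ (k0 :: ks) M u = conj_set (conjuncts k0 (Tk ks) M u).
Proof. by []. Qed.

Definition lab (M : model) (u : W M) : {set P} := [set p | u \in V M p].

Definition tauS (S : {set P}) : form :=
  bigAnd [seq (if p \in S then Var p else Neg (Var p)) | p <- enum P].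

Lemma tau_lab (M : model) u : tau_eps M u = tauS (lab M u).
Proof. by rewrite /tau_eps /tauS; congr bigAnd; apply: eq_map => p; rewrite inE. Qed.

Definition L0 : seq form := [seq tauS X | X <- enum [set: {set P}]].

Lemma tau_in (M : model) u : tau_eps M u \in L0.
Proof. by rewrite tau_lab; apply: map_f; rewrite mem_enum inE. Qed.

Lemma conj_sub k0 ks (L' : seq form) :
  (forall (M : model) u, typ ks M u \in L') ->
  exists C : seq form, forall (M : model) u f, conjuncts k0 (Tk ks) M u f -> f \in C.
Proof.
move=> HL.
set K := \max_(i < a) k0 i.
exists (L0 ++ [seq Deq p.1 p.2 t | p <- [seq (i, l) | i <- enum 'I_a, l <- iota 0 K], t <- L']
        ++ [seq Dia i (k0 i) t | i <- enum 'I_a, t <- L']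
        ++ [seq Deq i l Top | i <- enum 'I_a, l <- iota 0 K]).
move=> M u f [->|[[i [l [t [Ht /andP[_ Hl] -> _]]]]|[[i [t [Ht -> _]]]|[i [Hd ->]]]]].
- by rewrite mem_cat tau_in.
- rewrite mem_cat orbC !mem_cat; apply/orP; left; apply/orP; left.
  case: Ht => M' [w' ->].
  apply: (allpairs_f (fun p t => Deq p.1 p.2 t) (x := (i, l))); last by [].
  apply: (allpairs_f (fun i l => (i, l))); first by rewrite mem_enum.
  rewrite mem_iota /= add0n; apply: leq_trans Hl _.
  by apply: (leq_bigmax (F := k0) i).
- rewrite !mem_cat; apply/orP; right; apply/orP; right; apply/orP; left.
  case: Ht => M' [w' ->].
  by apply: (allpairs_f (fun i t => Dia i (k0 i) t)); rewrite ?mem_enum.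
- rewrite !mem_cat; apply/orP; right; apply/orP; right; apply/orP; right.
  apply: (allpairs_f (fun i l => Deq i l Top)); first by rewrite mem_enum.
  rewrite mem_iota /= add0n; apply: leq_trans Hd _.
  by apply: (leq_bigmax (F := k0) i).
Qed.

Lemma typ_fin ks : exists L : seq form, forall (M : model) u, typ ks M u \in L.
Proof.
elim: ks => [|k0 ks [L' HL']].
  by exists L0 => M u; apply: tau_in.
have [C HC] := conj_sub k0 ks L' HL'.
exists [seq bigAnd (mask (val m) C) | m <- enum [set: (size C).-tuple bool]].
move=> M u; rewrite typ_cons.
set SS := conjuncts k0 (Tk ks) M u.
have Hs : forall f, SS f <-> f \in [seq f <- C | asb (SS f)].
  move=> f; rewrite mem_filter; split.
    by move=> Sf; rewrite (HC M u f Sf) andbT; apply/asbE.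
  by case/andP => /asbE.
rewrite (conj_set_eq Hs).
apply/mapP; exists (map_tuple (fun f => asb (SS f)) (in_tuple C)).
  by rewrite mem_enum inE.
by rewrite /= filter_mask.
Qed.

Lemma conjuncts_fin k0 ks (M : model) u :
  exists s : seq form, forall f, conjuncts k0 (Tk ks) M u f <-> f \in s.
Proof.
have [L' HL'] := typ_fin ks.
have [C HC] := conj_sub k0 ks L' HL'.
by apply: (conj_set_fin (HC M u)).
Qed.

Lemma sat_typ_cons k0 ks (M N : model) u x :
  sat N (typ (k0 :: ks) M u) x <-> (forall f, conjuncts k0 (Tk ks) M u f -> sat N f x).
Proof. by rewrite typ_cons; apply: sat_conj_set; apply: conjuncts_fin. Qed.

Lemma sat_self ks (M : model) u : sat M (typ ks M u) u.
Proof.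
case: ks => [|k0 ks]; first by apply/sat_tau.
apply/sat_typ_cons => f [->|[[i [l [t [_ _ -> H]]]]|[[i [t [_ -> H]]]|[i [Hd ->]]]]] //.
- by apply/sat_tau.
- by rewrite /= cardsT' leqnn ltnn.
Qed.

End Main2.


Unset Strict Implicit.
Unset Printing Implicit Defensive.

Arguments lab {P a}. Arguments Tk {P a}. Arguments tauS {P a}.
Section Main3.
Variables (P : finType) (a : nat).
Local Notation form := (form P a).
Local Notation model := (model P a).

Fixpoint depth (f : form) : nat :=
  match f with
  | Top | Var _ => 0
  | Neg g => depth g
  | And g h => maxn (depth g) (depth h)
  | Dia _ _ g => (depth g).+1
  end.

Lemma depth_bigAnd (s : seq form) d :
  (forall f, f \in s -> depth f <= d) -> depth (bigAnd s) <= d.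
Proof.
move=> H; rewrite /bigAnd.
have H' : forall f, f \in sort (fun x y : form => pickle x <= pickle y) (undup s) -> depth f <= d.
  by move=> f; rewrite mem_sort mem_undup; apply: H.
move: H'; case: (sort _ _) => [|y r] //= H'.
have : depth y <= d by apply: H'; rewrite mem_head.
have : forall f, f \in r -> depth f <= d by move=> f fr; apply: H'; rewrite in_cons fr orbT.
elim: r y {H'} => [|z r IH] y //= Hr Hy.
apply: IH; first by move=> f fr; apply: Hr; rewrite in_cons fr orbT.
by rewrite geq_max Hy Hr ?mem_head.
Qed.

Lemma depth_conj_set (S : form -> Prop) d :
  (forall f, S f -> depth f <= d) -> depth (conj_set S) <= d.
Proof.
move=> H; rewrite /conj_set; case: excluded_middle_informative => [E|_] //.
case: constructive_indefinite_description => s Hs /=.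
by apply: depth_bigAnd => f /Hs; apply: H.
Qed.

Lemma depth_tau (M : model) u : depth (tau_eps M u) = 0.
Proof.
apply/eqP; rewrite -leqn0; apply: depth_bigAnd => f /mapP [p _ ->].
by case: ifP.
Qed.

Lemma depth_typ ks (M : model) u : depth (typ ks M u) <= size ks.
Proof.
elim: ks M u => [|k0 ks IH] M u; first by rewrite depth_tau.
rewrite typ_cons; apply: depth_conj_set.
move=> f [->|[[i [l [t [[M' [w' ->]] _ -> _]]]]|[[i [t [[M' [w' ->]] -> _]]]|[i [_ ->]]]]].
- by rewrite depth_tau.
- by rewrite /= maxnn ltnS IH.
- by rewrite /= ltnS IH.
- by [].
Qed.

Definition Qu := GenTree.tree {set P}.

Definition msel (m : Qu -> nat) : seq Qu :=
  match excluded_middle_informative (exists s : seq Qu, forall q, count_mem q s = m q) with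
  | left H => proj1_sig (constructive_indefinite_description _ H)
  | right _ => [::]
  end.

Lemma mselP m : (exists s : seq Qu, forall q, count_mem q s = m q) ->
  forall q, count_mem q (msel m) = m q.
Proof.
move=> H; rewrite /msel; case: excluded_middle_informative => // H'.
by case: constructive_indefinite_description.
Qed.

Definition getlab (t : Qu) : {set P} :=
  match t with
  | GenTree.Leaf X => X
  | GenTree.Node _ (GenTree.Leaf X :: _) => X
  | _ => set0
  end.

Definition Uaut : automaton P a :=
  @Automaton P a Qu (fun X => GenTree.Leaf X)
    (fun N q => GenTree.Node 0 (GenTree.Leaf (getlab q) :: [seq GenTree.Node 0 (msel (N i)) | i <- enum 'I_a]))
    (fun _ => true).

Lemma getlab_state (M : model) t u : getlab (state Uaut M t u) = lab M u.
Proof. by elim: t u => [|t IH] u //=. Qed.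

Lemma U_succ (M N : model) t u x :
  state Uaut M t.+1 u = state Uaut N t.+1 x ->
  forall i q, #|[set u' in succs M i u | state Uaut M t u' == q]| =
              #|[set x' in succs N i x | state Uaut N t x' == q]|.
Proof.
move=> /= [_ Hm] i q.
have := (eq_in_map _ _ _).2 Hm i (mem_enum _ i) => /= [[E]].
have ex : forall (K : model) (y : W K),
   exists s : seq Qu, forall q, count_mem q s = #|[set u' in succs K i y | state Uaut K t u' == q]|.
  move=> K y; exists [seq state Uaut K t u' | u' <- enum (succs K i y)] => q'.
  by rewrite count_map cnt.
rewrite -(mselP _ (ex M u) q) -(mselP _ (ex N x) q).
by rewrite E.
Qed.

Lemma sat_U (f : form) : forall t (M N : model) u x, depth f <= t ->
  state Uaut M t u = state Uaut N t x -> sat M f u = sat N f x.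
Proof.
elim: f => [|p|g IH|g IHg h IHh|i k g IH] t M N u x Hd E //=.
- have := congr1 getlab E; rewrite !getlab_state => /setP/(_ p).
  by rewrite !inE.
- by rewrite (IH t M N u x Hd E).
- move: Hd; rewrite geq_max => /andP[H1 H2].
  by rewrite (IHg t M N u x H1 E) (IHh t M N u x H2 E).
case: t Hd E => [|t] // Hd E.
set Phi := fun q => asb (exists (K : model) (y : W K), state Uaut K t y = q /\ sat K g y).
have PhiE : forall (K : model) (y : W K), Phi (state Uaut K t y) = sat K g y.
  move=> K y; apply/idP/idP.
    by move/asbE => [K' [y' [E' S']]]; rewrite (IH t K K' y y') // E'.
  by move=> Sy; apply/asbE; exists K, y.
have C : forall (K : model) (y : W K),
   #|[set u' in succs K i y | sat K g u']| =
   count Phi [seq state Uaut K t u' | u' <- enum (succs K i y)].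
  by move=> K y; rewrite count_map cnt; apply: eq_count => z /=; rewrite PhiE.
rewrite !C.
have Hp : perm_eq [seq state Uaut M t u' | u' <- enum (succs M i u)]
                  [seq state Uaut N t u' | u' <- enum (succs N i x)].
  rewrite /perm_eq; apply/allP => q _ /=; apply/eqP.
  by rewrite !count_map -!cnt (U_succ M N t u x E).
by move/permP: Hp => Hp; rewrite Hp.
Qed.

Lemma deg_sat (M : model) i u k : sat M (Dia i k Top) u = (k <= deg M i u).
Proof. by rewrite /= cardsT'. Qed.

Lemma Blem ks (M N : model) u x :
  (forall (A : automaton P a) t, t <= size ks -> state A M t u = state A N t x) ->
  typ ks M u = typ ks N x.
Proof.
move=> H; have E := H Uaut (size ks) (leqnn _).
have Hlab : lab M u = lab N x by rewrite -(getlab_state M (size ks)) E getlab_state.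
have Htau : tau_eps M u = tau_eps N x by rewrite !tau_lab Hlab.
have Hsat : forall f, depth f <= size ks -> sat M f u = sat N f x.
  by move=> f Hf; apply: (sat_U f (size ks)).
case: ks H E Hsat => [|k0 ks] H E Hsat //=.
have Hdeg : forall i, deg M i u = deg N i x.
  move=> i; have Hk : forall k, (k <= deg M i u) = (k <= deg N i x).
    by move=> k; rewrite -!deg_sat Hsat.
  by apply/eqP; rewrite eqn_leq Hk leqnn -Hk leqnn.
congr conj_set; apply: functional_extensionality => f.
apply: propositional_extensionality.
have Hdt : forall t, Tk ks t -> depth t <= size ks.
  by move=> t [M' [w' ->]]; apply: depth_typ.
have HD : forall i l t, Tk ks t -> sat M (Deq i l t) u = sat N (Deq i l t) x.
  by move=> i l t Ht; apply: Hsat; rewrite /= maxnn ltnS Hdt.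
have HD' : forall i t, Tk ks t -> sat M (Dia i (k0 i) t) u = sat N (Dia i (k0 i) t) x.
  by move=> i t Ht; apply: Hsat; rewrite /= ltnS Hdt.
rewrite /conjuncts; split.
- move=> [->|[[i [l [t [T1 T2 T3 T4]]]]|[[i [t [T1 T2 T3]]]|[i [T1 T2]]]]].
  + by left.
  + by right; left; exists i, l, t; split => //; rewrite -HD.
  + by right; right; left; exists i, t; split => //; rewrite -HD'.
  + by right; right; right; exists i; rewrite -Hdeg.
- move=> [->|[[i [l [t [T1 T2 T3 T4]]]]|[[i [t [T1 T2 T3]]]|[i [T1 T2]]]]].
  + by left.
  + by right; left; exists i, l, t; split => //; rewrite HD.
  + by right; right; left; exists i, t; split => //; rewrite HD'.
  + by right; right; right; exists i; rewrite Hdeg.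
Qed.

End Main3.


Unset Strict Implicit.
Unset Printing Implicit Defensive.

Arguments Blem {P a}. Arguments sat_self {P a}. Arguments sat_typ_cons {P a}.

Section Main4.
Variables (P : finType) (a : nat).
Local Notation form := (form P a).
Local Notation model := (model P a).

Lemma valid_deg k0 ks (M : model) u i :
  valid_widths M u (k0 :: ks) -> deg M i u < k0 i.
Proof.
move=> /(_ 0 i (ltn0Sn _)) /=; apply: leq_ltn_trans.
by apply: (leq_bigmax_cond (P := fun z => z == u)).
Qed.

Lemma valid_succ k0 ks (M : model) u i u' :
  valid_widths M u (k0 :: ks) -> u' \in succs M i u -> valid_widths M u' ks.
Proof.
move=> Hv Hu' j i' Hj.
have := Hv j.+1 i' Hj; rewrite /=; apply: leq_ltn_trans.
apply/bigmax_leqP => z Hz.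
apply: (leq_bigmax_cond (P := fun z => reach M j.+1 u z)) => /=.
apply/existsP; exists u'; rewrite Hz andbT.
by apply/existsP; exists i; move: Hu'; rewrite inE.
Qed.

Lemma Dlem ks : forall (M N : model) u x, valid_widths M u ks ->
  sat N (typ ks M u) x ->
  forall (A : automaton P a) t, t <= size ks -> state A M t u = state A N t x.
Proof.
elim: ks => [|k0 ks IH] M N u x Hv Hs A t Ht.
  case: t Ht => // _ /=; congr (Defs.pi A _); apply/setP => p; rewrite !inE.
  by move/sat_tau: Hs => ->.
have Hc := (sat_typ_cons k0 ks M N u x).1 Hs.
have Hlab : forall p, (x \in V N p) = (u \in V M p).
  by apply/sat_tau; apply: Hc; left.
elim: t Ht => [|t IHt] Ht.
  by rewrite /=; congr (Defs.pi A _); apply/setP => p; rewrite !inE Hlab.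
rewrite /= (IHt (ltnW Ht)); congr (Defs.delta A _ _).
apply: functional_extensionality => i; apply: functional_extensionality => q.
set X := succs M i u; set Y := succs N i x.
have HdM := valid_deg k0 ks M u i Hv.
have Hdeg : deg N i x = deg M i u.
  have := Hc (Deq i (deg M i u) Top) (or_intror (or_intror (or_intror (ex_intro _ i (conj HdM erefl))))).
  rewrite /= cardsT' => /andP[h1 h2]; apply/eqP; rewrite eqn_leq h1 andbT.
  by rewrite leqNgt.
have F : forall u0, u0 \in X -> forall (K : model) (y : W K),
    sat K (typ ks M u0) y -> typ ks K y = typ ks M u0 /\ state A K t y = state A M t u0.
  move=> u0 Hu0 K y Sy.
  have Hst := IH M K u0 y (valid_succ k0 ks M u i u0 Hv Hu0) Sy.
  split; first by symmetry; apply: Blem.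
  by symmetry; apply: Hst.
have Hcnt : forall (K : model) (y : W K) (Z : {set W K}) u0, u0 \in X ->
    count (fun y => (typ ks K y, state A K t y) == (typ ks M u0, state A M t u0)) (enum Z)
    = count (sat K (typ ks M u0)) (enum Z).
  move=> K y Z u0 Hu0; apply: eq_in_count => z _ /=.
  rewrite xpair_eqE.
  case Sz: (sat K (typ ks M u0) z).
    by have [-> ->] := F u0 Hu0 K z Sz; rewrite !eqxx.
  apply/negbTE/negP => /andP[/eqP E1 _].
  by move: Sz; rewrite -E1 sat_self.
set pX := [seq (typ ks M u', state A M t u') | u' <- enum X].
set pY := [seq (typ ks N y, state A N t y) | y <- enum Y].
have Hp : perm_eq pX pY.
  apply: count_perm.
    by rewrite !size_map -!cardE -/(deg M i u) -/(deg N i x) Hdeg.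
  move=> zz /mapP [u0]; rewrite mem_enum => Hu0 ->.
  rewrite !count_map.
  have -> : count (preim (fun u' => (typ ks M u', state A M t u')) (pred1 (typ ks M u0, state A M t u0))) (enum X)
     = count (sat M (typ ks M u0)) (enum X) by apply: (Hcnt M u X u0 Hu0).
  have -> : count (preim (fun u' => (typ ks N u', state A N t u')) (pred1 (typ ks M u0, state A M t u0))) (enum Y)
     = count (sat N (typ ks M u0)) (enum Y) by apply: (Hcnt N x Y u0 Hu0).
  rewrite -!cnt.
  set l := #|[set u' in X | sat M (typ ks M u0) u']|.
  have l_pos : 0 < l.
    by apply/card_gt0P; exists u0; rewrite inE Hu0 sat_self.
  have l_le : l <= deg M i u.
    by apply: subset_leq_card; apply/subsetP => z; rewrite inE => /andP[].
  have : sat N (Deq i l (typ ks M u0)) x.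
    apply: Hc; right; left; exists i, l, (typ ks M u0); split.
    - by exists M, u0.
    - by rewrite l_pos /=; apply: leq_ltn_trans l_le HdM.
    - by [].
    - by rewrite /= leqnn ltnn.
  move=> /andP[h1 h2]; apply/eqP; rewrite eqn_leq h1 /=.
  by rewrite leqNgt.
rewrite !cnt.
have -> : count (fun u' => state A M t u' == q) (enum X) = count (fun p => p.2 == q) pX.
  by rewrite count_map.
have -> : count (fun y => state A N t y == q) (enum Y) = count (fun p => p.2 == q) pY.
  by rewrite count_map.
by move/permP: Hp => ->.
Qed.

End Main4.


Arguments Blem {P a}. Arguments sat_self {P a}. Arguments Dlem {P a}.

Theorem lemma2 (P : finType) (a : nat) (a_pos : 0 < a) (n : nat)
    (M N : model P a) (w : W M) (v : W N) :
  same_full_type n M N w v <->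
  (forall (A : automaton P a) (t : nat), t <= n ->
     state A M t w = state A N t v).
Proof.
split.
- move=> H A t Ht.
  pose K := fun _ : 'I_a => (#|W M| + #|W N|).+1.
  pose ks := nseq n K.
  have vM : valid_widths M w ks.
    move=> j i; rewrite size_nseq => Hj; rewrite nth_nseq Hj.
    apply: (@leq_ltn_trans #|W M|); last by rewrite ltnS leq_addr.
    by apply/bigmax_leqP => z _; apply: max_card.
  have vN : valid_widths N v ks.
    move=> j i; rewrite size_nseq => Hj; rewrite nth_nseq Hj.
    apply: (@leq_ltn_trans #|W N|); last by rewrite ltnS leq_addl.
    by apply/bigmax_leqP => z _; apply: max_card.
  have E := H ks (size_nseq _ _) vM vN.
  apply: (Dlem ks M N w v vM _ A t); last by rewrite size_nseq.
  by rewrite E; apply: sat_self.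
- move=> H ks Hs _ _; apply: Blem => A t Ht; apply: H; by rewrite -Hs.
Qed.
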